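(* Fix $n\ge 1$ and a formula $\varphi$ of NM logic in the variables $x_1,\dots,x_n$. Let $O(\varphi,n)$ be the set of assignments $\mu$ of the variables $x_1,\dots,x_n$ to values in $\{0,\tfrac12,1\}$ (extended to all formulas by evaluation in the three-element NM chain $\{0,\tfrac12,1\}$) such that $\mu(\varphi)=1$. Then there is a bijection between $O(\varphi,n)$ and the set of minimal idempotent join-irreducible elements $g\in\mathcal{NM}_n$ such that $g\le[\varphi]_\equiv$.
   Context: An NM algebra is an algebra $\langle A,\wedge,\vee,\odot,\to,\bot,\top\rangle$ such that $(A,\wedge,\vee,\bot,\top)$ is a bounded lattice, $\langle A,\odot,\top\rangle$ is a commutative monoid, and for all $x,y,z$: $x\odot y\le z$ iff $x\le y\to z$; $(x\to y)\vee(y\to x)=\top$; $\neg(x\odot y)\vee((x\wedge y)\to(x\odot y))=\top$ where $\neg x:=x\to\bot$; and $\neg\neg x=x$. The standard NM algebra is $[0,1]$ with $\wedge=\min$, $\vee=\max$, $x\odot y=\min(x,y)$ if $x+y>1$ and $0$ otherwise, $x\to y=1$ if $x\le y$ and $\max(1-x,y)$ otherwise; $\{0,\tfrac12,1\}$ is a subalgebra (the three-element NM chain). Formulas of NM logic are built from variables, $\bot$, and the connectives $\odot,\wedge,\to$ (with derived $\vee,\neg,\leftrightarrow$). $\mathcal{NM}_n$ is the free NM algebra on $n$ generators, i.e. the Lindenbaum algebra of formulas in $x_1,\dots,x_n$ modulo logical equivalence $\equiv$ (validity of $\varphi\leftrightarrow\psi$ in all NM algebras); $[\varphi]_\equiv$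 is the class of $\varphi$. It is a finite distributive lattice. An element is join-irreducible if it is not $\bot$ and $x=y\vee z$ implies $x=y$ or $x=z$; it is idempotent if $g\odot g=g$; a minimal idempotent join-irreducible element is one minimal among idempotent join-irreducible elements. *)

(* Defs.v *)
From HB Require Import structures.
From mathcomp Require Import all_boot all_order all_algebra.
Set Implicit Arguments. Unset Strict Implicit. Unset Printing Implicit Defensive.
Import Order.TTheory GRing.Theory Num.Theory.

Record NMAlgebra := {
  nm_car :> Type;
  nm_meet : nm_car -> nm_car -> nm_car;
  nm_join : nm_car -> nm_car -> nm_car;
  nm_conj : nm_car -> nm_car -> nm_car;
  nm_imp  : nm_car -> nm_car -> nm_car;
  nm_bot : nm_car;
  nm_top : nm_car;
  nm_meetA : forall x y z, nm_meet x (nm_meet y z) = nm_meet (nm_meet x y) z;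
  nm_joinA : forall x y z, nm_join x (nm_join y z) = nm_join (nm_join x y) z;
  nm_meetC : forall x y, nm_meet x y = nm_meet y x;
  nm_joinC : forall x y, nm_join x y = nm_join y x;
  nm_meetJ : forall x y, nm_meet x (nm_join x y) = x;
  nm_joinM : forall x y, nm_join x (nm_meet x y) = x;
  nm_bot_le : forall x, nm_meet nm_bot x = nm_bot;
  nm_le_top : forall x, nm_meet x nm_top = x;
  nm_conjA : forall x y z, nm_conj x (nm_conj y z) = nm_conj (nm_conj x y) z;
  nm_conjC : forall x y, nm_conj x y = nm_conj y x;
  nm_conj1 : forall x, nm_conj x nm_top = x;
  nm_resid : forall x y z,
      nm_meet (nm_conj x y) z = nm_conj x y <-> nm_meet x (nm_imp y z) = x;
  nm_prelin : forall x y, nm_join (nm_imp x y) (nm_imp y x) = nm_top;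
  nm_nm : forall x y,
      nm_join (nm_imp (nm_conj x y) nm_bot)
              (nm_imp (nm_meet x y) (nm_conj x y)) = nm_top;
  nm_invol : forall x, nm_imp (nm_imp x nm_bot) nm_bot = x
}.

Inductive nmform (n : nat) : Type :=
| FVar of 'I_n
| FBot
| FConj of nmform n & nmform n
| FMeet of nmform n & nmform n
| FImp of nmform n & nmform n.
Arguments FBot {n}.

Definition FNeg n (a : nmform n) := FImp a FBot.
Definition FJoin n (a b : nmform n) :=
  FMeet (FImp (FImp a b) b) (FImp (FImp b a) a).
Definition FIff n (a b : nmform n) := FMeet (FImp a b) (FImp b a).

Fixpoint evalA (A : NMAlgebra) n (v : 'I_n -> A) (f : nmform n) : A :=
  match f with
  | FVar i => v i
  | FBot => nm_bot A
  | FConj a b => nm_conj (evalA v a) (evalA v b)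
  | FMeet a b => nm_meet (evalA v a) (evalA v b)
  | FImp a b => nm_imp (evalA v a) (evalA v b)
  end.

Definition fequiv n (a b : nmform n) : Prop :=
  forall (A : NMAlgebra) (v : 'I_n -> A), evalA v (FIff a b) = nm_top A.

(* ---------- order and notions in the free algebra NM_n = nmform n / fequiv ---------- *)
Definition fle n (a b : nmform n) : Prop := fequiv (FMeet a b) a.

Definition join_irreducible n (g : nmform n) : Prop :=
  ~ fequiv g FBot /\
  forall b c : nmform n, fequiv g (FJoin b c) -> fequiv g b \/ fequiv g c.

Definition idempotent n (g : nmform n) : Prop := fequiv (FConj g g) g.

Definition idem_ji n (g : nmform n) : Prop := idempotent g /\ join_irreducible g.

Definition min_idem_ji n (g : nmform n) : Prop :=
  idem_ji g /\ forall h : nmform n, idem_ji h -> fle h g -> fequiv h g.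

(* ---------- the three-element NM chain {0,1/2,1} inside standard NM on rat ---------- *)
Local Open Scope ring_scope.
Definition std_conj (x y : rat) : rat := if 1 < x + y then Num.min x y else 0.
Definition std_imp (x y : rat) : rat := if x <= y then 1 else Num.max (1 - x) y.

Fixpoint eval3 n (v : 'I_n -> rat) (f : nmform n) : rat :=
  match f with
  | FVar i => v i
  | FBot => 0
  | FConj a b => std_conj (eval3 v a) (eval3 v b)
  | FMeet a b => Num.min (eval3 v a) (eval3 v b)
  | FImp a b => std_imp (eval3 v a) (eval3 v b)
  end.

Definition val3 (k : 'I_3) : rat := (k%:R) / 2.

Definition assign n := {ffun 'I_n -> 'I_3}.

Definition O_set n (phi : nmform n) : {set assign n} :=
  [set mu : assign n | eval3 (fun i => val3 (mu i)) phi == 1].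

(* Main.v *)
Require Import Defs.
From mathcomp Require Import all_boot all_order all_algebra lra.
From Stdlib Require Import Classical.
Set Implicit Arguments. Unset Strict Implicit. Unset Printing Implicit Defensive.

Section Alg.
Variable A : NMAlgebra.
Local Notation M := (@nm_meet A).
Local Notation J := (@nm_join A).
Local Notation C := (@nm_conj A).
Local Notation I := (@nm_imp A).
Local Notation B := (@nm_bot A).
Local Notation T := (@nm_top A).

Definition le (x y : A) := M x y = x.
Definition neg (x : A) := I x B.

Lemma meetxx (x : A) : M x x = x.
Proof. by rewrite -{2}(nm_joinM x x) nm_meetJ. Qed.
Lemma le_refl (x : A) : le x x. Proof. exact: meetxx. Qed.
Lemma le_trans (x y z : A) : le x y -> le y z -> le x z.
Proof. rewrite /le => h1 h2. by rewrite -h1 -nm_meetA h2. Qed.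
Lemma le_antisym (x y : A) : le x y -> le y x -> x = y.
Proof. rewrite /le => h1 h2. by rewrite -h1 nm_meetC h2. Qed.
Lemma le_meetl (x y : A) : le (M x y) x.
Proof. by rewrite /le nm_meetC nm_meetA meetxx. Qed.
Lemma le_meetr (x y : A) : le (M x y) y.
Proof. rewrite nm_meetC; exact: le_meetl. Qed.
Lemma le_meet (z x y : A) : le z x -> le z y -> le z (M x y).
Proof. rewrite /le => h1 h2. by rewrite nm_meetA h1 h2. Qed.
Lemma le_meetP (z x y : A) : le z (M x y) -> le z x /\ le z y.
Proof. move=> h; split; apply: le_trans h _; [exact: le_meetl| exact: le_meetr]. Qed.
Lemma le_joinl (x y : A) : le x (J x y). Proof. exact: nm_meetJ. Qed.
Lemma le_joinE (x y : A) : le x y -> J x y = y.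
Proof. rewrite /le => h. by rewrite -{1}h nm_joinC nm_meetC nm_joinM. Qed.
Lemma le_joinE' (x y : A) : J x y = y -> le x y.
Proof. rewrite /le => h. by rewrite -h nm_meetJ. Qed.
Lemma le_joinr (x y : A) : le y (J x y). Proof. rewrite nm_joinC; exact: le_joinl. Qed.
Lemma le_join_lub (x y z : A) : le x z -> le y z -> le (J x y) z.
Proof. move=> /le_joinE h1 /le_joinE h2; apply: le_joinE'. by rewrite -nm_joinA h2 h1. Qed.
Lemma le_bot (x : A) : le B x. Proof. exact: nm_bot_le. Qed.
Lemma le_top (x : A) : le x T. Proof. exact: nm_le_top. Qed.
Lemma top_le (x : A) : le T x -> x = T.
Proof. move=> h; exact: le_antisym (le_top x) h. Qed.

Lemma residL (x y z : A) : le (C x y) z -> le x (I y z).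
Proof. exact: (proj1 (nm_resid x y z)). Qed.
Lemma residR (x y z : A) : le x (I y z) -> le (C x y) z.
Proof. exact: (proj2 (nm_resid x y z)). Qed.
Lemma conj1l (x : A) : C T x = x. Proof. by rewrite nm_conjC nm_conj1. Qed.
Lemma conj_monol (x y z : A) : le x y -> le (C x z) (C y z).
Proof. move=> h; apply: residR; apply: le_trans h _; apply: residL; exact: le_refl. Qed.
Lemma conj_monor (x y z : A) : le x y -> le (C z x) (C z y).
Proof. rewrite !(nm_conjC z); exact: conj_monol. Qed.
Lemma conj_mono (x1 y1 x2 y2 : A) : le x1 y1 -> le x2 y2 -> le (C x1 x2) (C y1 y2).
Proof. move=> h1 h2; apply: le_trans (conj_monol _ h1) _; exact: conj_monor. Qed.
Lemma conj_lel (x y : A) : le (C x y) x.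
Proof. have := conj_monor x (le_top y). by rewrite nm_conj1. Qed.
Lemma conj_ler (x y : A) : le (C x y) y.
Proof. rewrite nm_conjC; exact: conj_lel. Qed.
Lemma mp (x y : A) : le (C x (I x y)) y.
Proof. rewrite nm_conjC; apply: residR; exact: le_refl. Qed.
Lemma imp_monor (x y z : A) : le y z -> le (I x y) (I x z).
Proof. move=> h; apply: residL; apply: le_trans h; rewrite nm_conjC; exact: mp. Qed.
Lemma imp_top (x y : A) : le x y -> I x y = T.
Proof. move=> h; apply: top_le; apply: residL; by rewrite conj1l. Qed.
Lemma imp_top' (x y : A) : I x y = T -> le x y.
Proof. move=> h; have: le T (I x y) by rewrite h; exact: le_refl.
move/residR; by rewrite conj1l. Qed.
Lemma yoneda (x y : A) : (forall z, le z x -> le z y) -> (forall z, le z y -> le z x) -> x = y.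
Proof. move=> h1 h2; apply: le_antisym; [apply: h1|apply: h2]; exact: le_refl. Qed.
Lemma conjB (x : A) : C x B = B.
Proof. apply: le_antisym (le_bot _). apply: residR. rewrite imp_top; [exact: le_top|exact: le_bot]. Qed.
Lemma conjBl (x : A) : C B x = B. Proof. by rewrite nm_conjC conjB. Qed.
Lemma distr (x y z : A) : C x (J y z) = J (C x y) (C x z).
Proof.
apply: le_antisym.
- rewrite nm_conjC; apply: residR; apply: le_join_lub; apply: residL; rewrite nm_conjC;
  [exact: le_joinl|exact: le_joinr].
- apply: le_join_lub; apply: conj_monor; [exact: le_joinl|exact: le_joinr].
Qed.
Lemma le_neg (x y : A) : le x (neg y) -> C x y = B.
Proof. move/residR => h; exact: le_antisym h (le_bot _). Qed.
Lemma le_neg' (x y : A) : C x y = B -> le x (neg y).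
Proof. move=> h; apply: residL; rewrite h; exact: le_refl. Qed.
Lemma conj_neg (x : A) : C x (neg x) = B.
Proof. apply: le_antisym (le_bot _); exact: mp. Qed.
Lemma negneg (x : A) : neg (neg x) = x. Proof. exact: nm_invol. Qed.
Lemma conjA' (x y z : A) : C (C x y) z = C x (C y z). Proof. by rewrite nm_conjA. Qed.
Lemma imp_neg (x y : A) : I x (neg y) = neg (C x y).
Proof.
apply: yoneda => z h.
- apply: residL; rewrite nm_conjA; apply: residR; apply: residR; exact: h.
- apply: residL; apply: residL; rewrite conjA'; apply: residR; exact: h.
Qed.
Lemma contra (x y : A) : I x y = I (neg y) (neg x).
Proof. by rewrite imp_neg -{1}(negneg y) imp_neg nm_conjC. Qed.
Lemma imp_topl (x : A) : I T x = x.
Proof.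
apply: yoneda => z h.
- have := residR h; by rewrite nm_conj1.
- apply: residL; by rewrite nm_conj1.
Qed.
Lemma imp_xx (x : A) : I x x = T. Proof. apply: imp_top; exact: le_refl. Qed.
Lemma imp_Bx (x : A) : I B x = T. Proof. apply: imp_top; exact: le_bot. Qed.
Lemma imp_xT (x : A) : I x T = T. Proof. apply: imp_top; exact: le_top. Qed.
Lemma meetT (x : A) : M T x = x. Proof. by rewrite nm_meetC nm_le_top. Qed.
Lemma meetTr (x : A) : M x T = x. Proof. exact: nm_le_top. Qed.
Lemma meetB (x : A) : M B x = B. Proof. exact: nm_bot_le. Qed.
Lemma meetBr (x : A) : M x B = B. Proof. by rewrite nm_meetC nm_bot_le. Qed.
Lemma iffT (x y : A) : M (I x y) (I y x) = T -> x = y.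
Proof.
move=> h; have: le T (M (I x y) (I y x)) by rewrite h; exact: le_refl.
case/le_meetP => /top_le/imp_top' h1 /top_le/imp_top' h2; exact: le_antisym.
Qed.
Lemma iff_refl (x : A) : M (I x x) (I x x) = T. Proof. by rewrite imp_xx meetxx. Qed.
Lemma join_ub (x y : A) : le x (M (I (I x y) y) (I (I y x) x)).
Proof. apply: le_meet; apply: residL; [exact: mp | exact: conj_lel]. Qed.

Lemma conj_meet (x y z : A) : C x (M y z) = M (C x y) (C x z).
Proof.
apply: le_antisym.
- apply: le_meet; apply: conj_monor; [exact: le_meetl|exact: le_meetr].
- set w := M (C x y) (C x z).
  rewrite -(nm_conj1 w) -(nm_prelin y z) distr; apply: le_join_lub.
  + apply: le_trans (conj_monol _ (le_meetl _ _)) _; rewrite conjA'.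
    apply: conj_monor; apply: le_meet; [exact: conj_lel|exact: mp].
  + apply: le_trans (conj_monol _ (le_meetr _ _)) _; rewrite conjA'.
    apply: conj_monor; apply: le_meet; [exact: mp|exact: conj_lel].
Qed.

Lemma sq_cube (x : A) : C x x = C (C x x) x.
Proof.
apply: le_antisym; last exact: conj_lel.
rewrite -{1}(nm_conj1 (C x x)) -(nm_nm x x) meetxx distr; apply: le_join_lub.
- apply: le_trans (mp _ _) (le_bot _).
- rewrite conjA' [C (C x x) x]conjA'; apply: conj_monor; exact: mp.
Qed.

Definition idem (e : A) := C e e = e.
Lemma sq_idem (x : A) : idem (C x x).
Proof. by rewrite /idem nm_conjA -sq_cube -sq_cube. Qed.
Lemma conjACA (a b c d : A) : C (C a b) (C c d) = C (C a c) (C b d).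
Proof. by rewrite !conjA' (nm_conjA b c d) (nm_conjC b c) conjA'. Qed.
Lemma idem_conj (a b : A) : idem a -> idem b -> idem (C a b).
Proof. rewrite /idem => ha hb. by rewrite conjACA ha hb. Qed.
Lemma idemT : idem T. Proof. exact: nm_conj1. Qed.
Lemma idem_le (e x : A) : idem e -> le e x -> C e x = e.
Proof. move=> he h; apply: le_antisym; first exact: conj_lel. rewrite -{1}he; exact: conj_monor. Qed.
Lemma idem_le_conj (e x : A) : C e x = e -> le e x.
Proof. move=> h; rewrite -h; exact: conj_ler. Qed.

Section Idem.
Variable e : A.
Hypothesis he : idem e.
Lemma idemA (x : A) : C e (C e x) = C e x. Proof. by rewrite nm_conjA he. Qed.
Lemma K_ex (x : A) : C e (I e x) = C e x.
Proof.
apply: le_antisym.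
- rewrite -{1}he conjA'; apply: conj_monor; exact: mp.
- apply: conj_monor; apply: residL; exact: conj_lel.
Qed.
Lemma K_conj (a b : A) : C e (C a b) = C (C e a) (C e b).
Proof. by rewrite conjACA he. Qed.
Lemma K_meet (a b : A) : C e (M a b) = M (C e a) (C e b).
Proof. exact: conj_meet. Qed.
Lemma K_imp (a b : A) : C e (I a b) = C e (I (C e a) (C e b)).
Proof.
have h2 : I e (I a b) = I (C e a) b.
  apply: yoneda => z h.
  - apply: residL; rewrite nm_conjA; apply: residR; apply: residR; exact: h.
  - apply: residL; apply: residL; rewrite conjA'; apply: residR; exact: h.
have h3 : I (C e a) b = I (C e a) (C e b).
  apply: le_antisym; last by apply: imp_monor; exact: conj_ler.
  apply: residL. rewrite -{2}(idemA a) nm_conjA (nm_conjC _ e) conjA'.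
  apply: conj_monor; rewrite nm_conjC; exact: mp.
by rewrite -K_ex h2 h3.
Qed.
Lemma K_neg (a b : A) : C e a = C e b -> C e (neg a) = C e (neg b).
Proof. move=> h; by rewrite /neg K_imp h -K_imp. Qed.
Lemma HH0 (a b : A) : C e a = C e (neg a) -> C e b = C e (neg b) -> le (C e a) b.
Proof.
move=> ha hb.
rewrite -(nm_conj1 (C e a)) -(nm_prelin a b) distr; apply: le_join_lub.
- rewrite conjA'; apply: le_trans (conj_ler _ _) _; exact: mp.
- rewrite {1}ha contra conjA'. apply: le_trans (conj_monor _ (mp _ _)) _.
  rewrite -hb; exact: conj_ler.
Qed.
Lemma HH (a b : A) : C e a = C e (neg a) -> C e b = C e (neg b) -> C e a = C e b.
Proof.
move=> ha hb; apply: le_antisym.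
- rewrite -idemA; apply: conj_monor; exact: HH0.
- rewrite -(idemA b); apply: conj_monor; exact: HH0.
Qed.
End Idem.

Lemma Lzero (w y : A) : idem w -> C w (C y y) = B -> C w (C (neg y) (neg y)) = B ->
  C w (C (M (I y (neg y)) (I (neg y) y)) (M (I y (neg y)) (I (neg y) y))) = B -> w = B.
Proof.
move=> hw h1 h2 h3.
set r := M (I y (neg y)) (I (neg y) y) in h3 *.
have hr : le w r.
  apply: le_meet.
  - rewrite imp_neg; exact: le_neg'.
  - rewrite -{2}(negneg y) imp_neg; exact: le_neg'.
have h4 : le w (C r r) by rewrite -hw; exact: conj_mono.
have h5 := le_neg' h3.
apply: le_antisym (le_bot _). rewrite -hw. apply: le_trans (conj_mono h4 h5) _.
rewrite conj_neg; exact: le_refl.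
Qed.
End Alg.

Inductive t3 := Z3 | H3 | O3.
Definition meet3 x y := match x, y with Z3, _ => Z3 | _, Z3 => Z3 | H3, _ => H3 | _, H3 => H3 | _, _ => O3 end.
Definition join3 x y := match x, y with O3, _ => O3 | _, O3 => O3 | H3, _ => H3 | _, H3 => H3 | _, _ => Z3 end.
Definition conj3 x y := match x, y with O3, y => y | x, O3 => x | _, _ => Z3 end.
Definition imp3 x y := match x, y with Z3, _ => O3 | _, O3 => O3 | O3, y => y | H3, H3 => O3 | H3, Z3 => H3 end.
Ltac t3c := intros; repeat match goal with x : t3 |- _ => destruct x end; simpl; try reflexivity.
Definition T3 : NMAlgebra := {| nm_car := t3; nm_meet := meet3; nm_join := join3;
  nm_conj := conj3; nm_imp := imp3; nm_bot := Z3; nm_top := O3;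
  nm_meetA := ltac:(t3c); nm_joinA := ltac:(t3c); nm_meetC := ltac:(t3c);
  nm_joinC := ltac:(t3c); nm_meetJ := ltac:(t3c); nm_joinM := ltac:(t3c);
  nm_bot_le := ltac:(t3c); nm_le_top := ltac:(t3c); nm_conjA := ltac:(t3c);
  nm_conjC := ltac:(t3c); nm_conj1 := ltac:(t3c);
  nm_resid := ltac:(t3c; split; congruence);
  nm_prelin := ltac:(t3c); nm_nm := ltac:(t3c); nm_invol := ltac:(t3c) |}.

Section Forms.
Variable n : nat.
Definition Ftop : nmform n := FImp FBot FBot.
Definition Ffac (i : 'I_n) (k : t3) : nmform n := match k with
 | O3 => FConj (FVar i) (FVar i)
 | Z3 => FConj (FNeg (FVar i)) (FNeg (FVar i))
 | H3 => FConj (FIff (FVar i) (FNeg (FVar i))) (FIff (FVar i) (FNeg (FVar i))) end.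
Definition Fprod (l : seq 'I_n) (nu : 'I_n -> t3) : nmform n :=
  foldr (fun i acc => FConj (Ffac i (nu i)) acc) Ftop l.
Definition fe nu := Fprod (enum 'I_n) nu.
Definition ev3 (nu : 'I_n -> t3) (t : nmform n) : t3 := evalA (A:=T3) nu t.

Lemma evalA_ext (A : NMAlgebra) (v v' : 'I_n -> A) t :
  (forall i, v i = v' i) -> evalA v t = evalA v' t.
Proof. move=> h; elim: t => //= [a -> b ->|a -> b ->|a -> b ->] //. Qed.
Lemma Fprod_ext l nu nu' : (forall i, i \in l -> nu i = nu' i) -> Fprod l nu = Fprod l nu'.
Proof.
elim: l => //= j l IH h. rewrite h ?mem_head // IH // => i hi; apply: h.
by rewrite in_cons hi orbT.
Qed.
Lemma prod_idem (A : NMAlgebra) (v : 'I_n -> A) l nu : idem (evalA v (Fprod l nu)).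
Proof.
elim: l => [|j l IH] /=; first by rewrite imp_Bx; exact: idemT.
apply: idem_conj => //; case: (nu j) => /=; exact: sq_idem.
Qed.
Lemma prod_le (A : NMAlgebra) (v : 'I_n -> A) l nu i : i \in l ->
  le (evalA v (Fprod l nu)) (evalA v (Ffac i (nu i))).
Proof.
elim: l => // j l IH; rewrite in_cons => /orP [/eqP -> | hi] /=; first exact: conj_lel.
apply: le_trans (conj_ler _ _) (IH hi).
Qed.
End Forms.

Section Inv.
Variables (A : NMAlgebra) (n : nat) (v : 'I_n -> A) (nu : 'I_n -> t3).
Local Notation M := (@nm_meet A).
Local Notation C := (@nm_conj A).
Local Notation I := (@nm_imp A).
Local Notation B := (@nm_bot A).
Local Notation T := (@nm_top A).
Let e := evalA v (fe nu).
Let he : idem e := prod_idem v _ nu.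
Definition Pk (k : t3) (x : A) := match k with
  | O3 => C e x = e | Z3 => C e x = B | H3 => C e x = C e (neg x) end.
Definition rep (k : t3) (x : A) := match k with O3 => T | Z3 => B | H3 => x end.
Lemma Pcong k x y : C e x = C e y -> Pk k x -> Pk k y.
Proof.
case: k => /= h; [by rewrite -h | | by rewrite -h].
move=> hp; rewrite -h hp; exact: K_neg.
Qed.
Lemma Prep k x : Pk k x -> C e x = C e (rep k x).
Proof. by case: k => /= ->; rewrite ?nm_conj1 ?conjB. Qed.
Lemma repC a a' b b' : C e a = C e a' -> C e b = C e b' -> C e (C a b) = C e (C a' b').
Proof. move=> ha hb; by rewrite !(K_conj he) ha hb. Qed.
Lemma repM a a' b b' : C e a = C e a' -> C e b = C e b' -> C e (M a b) = C e (M a' b').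
Proof. move=> ha hb; by rewrite !(K_meet e) ha hb. Qed.
Lemma repI a a' b b' : C e a = C e a' -> C e b = C e b' -> C e (I a b) = C e (I a' b').
Proof. move=> ha hb; by rewrite (K_imp he a b) ha hb -K_imp. Qed.

Lemma Inv t : Pk (ev3 nu t) (evalA v t).
Proof.
elim: t => [i| |a iha b ihb|a iha b ihb|a iha b ihb]; rewrite /ev3 /=.
- have := prod_le v nu (mem_enum _ i); rewrite -/e.
  case: (nu i) => /= hfac.
  + apply: le_neg; exact: le_trans hfac (conj_lel _ _).
  + have := le_trans hfac (conj_lel _ _); case/le_meetP => h1 h2.
    apply: le_antisym.
    * rewrite -(idemA he (v i)); apply: conj_monor; apply: residR; exact: h1.
    * rewrite -(idemA he (neg (v i))); apply: conj_monor; apply: residR; exact: h2.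
  + apply: idem_le => //; exact: le_trans hfac (conj_lel _ _).
- exact: conjB.
- move: iha ihb; rewrite /ev3; set ea := evalA v a; set eb := evalA v b.
  case: (evalA (A:=T3) nu a) => ha; case: (evalA (A:=T3) nu b) => hb /=.
  + by rewrite (repC (Prep ha) (erefl _)) /= conjBl conjB.
  + by rewrite (repC (Prep ha) (erefl _)) /= conjBl conjB.
  + by rewrite (repC (Prep ha) (erefl _)) /= conjBl conjB.
  + by rewrite (repC (erefl _) (Prep hb)) /= conjB conjB.
  + by rewrite (K_conj he) -(HH he ha hb) {2}ha -K_conj // conj_neg conjB.
  + apply: (Pcong _ ha); by rewrite (repC (erefl _) (Prep hb)) /= nm_conj1.
  + by rewrite (repC (erefl _) (Prep hb)) /= conjB conjB.
  + apply: (Pcong _ hb); by rewrite (repC (Prep ha) (erefl _)) /= conj1l.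
  + apply: (Pcong _ hb); by rewrite (repC (Prep ha) (erefl _)) /= conj1l.
- move: iha ihb; rewrite /ev3; set ea := evalA v a; set eb := evalA v b.
  case: (evalA (A:=T3) nu a) => ha; case: (evalA (A:=T3) nu b) => hb /=.
  + by rewrite (repM (Prep ha) (erefl _)) /= meetB conjB.
  + by rewrite (repM (Prep ha) (erefl _)) /= meetB conjB.
  + by rewrite (repM (Prep ha) (erefl _)) /= meetB conjB.
  + by rewrite (repM (erefl _) (Prep hb)) /= meetBr conjB.
  + apply: (Pcong _ ha); by rewrite (K_meet e) -(HH he ha hb) meetxx.
  + apply: (Pcong _ ha); by rewrite (repM (erefl _) (Prep hb)) /= meetTr.
  + by rewrite (repM (erefl _) (Prep hb)) /= meetBr conjB.
  + apply: (Pcong _ hb); by rewrite (repM (Prep ha) (erefl _)) /= meetT.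
  + apply: (Pcong _ hb); by rewrite (repM (Prep ha) (erefl _)) /= meetT.
- move: iha ihb; rewrite /ev3; set ea := evalA v a; set eb := evalA v b.
  case: (evalA (A:=T3) nu a) => ha; case: (evalA (A:=T3) nu b) => hb /=.
  + by rewrite (repI (Prep ha) (erefl _)) /= imp_Bx nm_conj1.
  + by rewrite (repI (Prep ha) (erefl _)) /= imp_Bx nm_conj1.
  + by rewrite (repI (Prep ha) (erefl _)) /= imp_Bx nm_conj1.
  + apply: (Pcong (k := H3) (x := neg ea)).
    * by rewrite (repI (erefl _) (Prep hb)).
    * by rewrite /= negneg -ha.
  + by rewrite (K_imp he) -(HH he ha hb) imp_xx nm_conj1.
  + by rewrite (repI (erefl _) (Prep hb)) /= imp_xT nm_conj1.
  + apply: (Pcong _ hb); by rewrite (repI (Prep ha) (erefl _)) /= imp_topl.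
  + apply: (Pcong _ hb); by rewrite (repI (Prep ha) (erefl _)) /= imp_topl.
  + by rewrite (repI (erefl _) (Prep hb)) /= imp_xT nm_conj1.
Qed.
End Inv.

Lemma conj3O x y : conj3 x y = O3 <-> x = O3 /\ y = O3.
Proof. case: x; case: y; split; (try case); intros; simpl in *; try congruence; auto. Qed.

Section Facts.
Variable n : nat.
Lemma fac3 (nu : 'I_n -> t3) i k : ev3 nu (Ffac i k) = O3 <-> nu i = k.
Proof. rewrite /ev3; case: k; rewrite /= /FIff /FNeg /=; case: (nu i); split; intro; simpl in *; congruence. Qed.
Lemma prod3 (nu : 'I_n -> t3) l mu : ev3 nu (Fprod l mu) = O3 <-> forall i, i \in l -> nu i = mu i.
Proof.
elim: l => [|j l IH] /=; first by split.
rewrite /ev3 /=; change (conj3 (ev3 nu (Ffac j (mu j))) (ev3 nu (Fprod l mu)) = O3 <->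
  forall i, i \in j :: l -> nu i = mu i).
rewrite conj3O; split.
- case=> /fac3 h1 /IH h2 i; rewrite in_cons => /orP [/eqP -> //| hi]; exact: h2.
- move=> h; split; first by apply/fac3; apply: h; rewrite mem_head.
  apply/IH => i hi; apply: h; by rewrite in_cons hi orbT.
Qed.
Lemma fe_self (mu : 'I_n -> t3) : ev3 mu (fe mu) = O3.
Proof. by apply/prod3. Qed.
Lemma fe_eq (nu mu : 'I_n -> t3) : ev3 nu (fe mu) = O3 -> forall i, nu i = mu i.
Proof. move/prod3 => h i; apply: h; exact: mem_enum. Qed.

Lemma feq (A : NMAlgebra) (v : 'I_n -> A) (a b : nmform n) : fequiv a b -> evalA v a = evalA v b.
Proof. move/(_ A v) => /= h; exact: iffT h. Qed.
Lemma fequiv_of (a b : nmform n) : (forall (A : NMAlgebra) (v : 'I_n -> A), evalA v a = evalA v b) -> fequiv a b.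
Proof. move=> h A v /=; rewrite h; exact: iff_refl. Qed.
Lemma fequiv_sym (a b : nmform n) : fequiv a b -> fequiv b a.
Proof. move=> h; apply: fequiv_of => A v; by rewrite (feq v h). Qed.
Lemma fle_of (a b : nmform n) : (forall (A : NMAlgebra) (v : 'I_n -> A), le (evalA v a) (evalA v b)) -> fle a b.
Proof. move=> h; apply: fequiv_of => A v /=; exact: h. Qed.
Lemma fle_to (A : NMAlgebra) (v : 'I_n -> A) (a b : nmform n) : fle a b -> le (evalA v a) (evalA v b).
Proof. move=> h; exact: (feq v h). Qed.

Lemma claimA (nu : 'I_n -> t3) t : ev3 nu t = O3 -> fle (fe nu) t.
Proof.
move=> h; apply: fle_of => A v. have := Inv v nu t; rewrite h /= => H.
exact: idem_le_conj H.
Qed.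

Lemma partition (A : NMAlgebra) (v : 'I_n -> A) (l : seq 'I_n) (h : A) : uniq l -> idem h ->
  (forall nu, nm_conj (evalA v (Fprod l nu)) h = nm_bot A) -> h = nm_bot A.
Proof.
elim: l h => [|i l IH] h /=.
- move=> _ hh H; have := H (fun _ => O3); by rewrite /= imp_Bx conj1l.
- case/andP => hi hu hh H; apply: (IH h hu hh) => nu.
  set w := nm_conj (evalA v (Fprod l nu)) h.
  have hw : idem w by apply: idem_conj => //; exact: prod_idem.
  have Hk k : nm_conj w (evalA v (Ffac i k)) = nm_bot A.
    have := H (fun j => if j == i then k else nu j); rewrite /= eqxx.
    rewrite (@Fprod_ext _ _ _ nu); last first.
      move=> j hj; case: eqP => // ej; by rewrite -ej hj in hi.
    by rewrite conjA' nm_conjC.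
  exact: (Lzero hw (Hk O3) (Hk Z3) (Hk H3)).
Qed.

Lemma nonzero_ex (h : nmform n) : Defs.idempotent h -> ~ fequiv h FBot -> exists nu, ev3 nu h = O3.
Proof.
move=> hid hnz; apply: NNPP => Hn; apply: hnz; apply: fequiv_of => A v /=.
apply: (partition (v := v) (l := enum 'I_n)); first exact: enum_uniq.
- exact: (feq v hid).
- move=> nu; have := Inv v nu h.
  case E: (ev3 nu h) => /= H //.
  + have hh : nm_conj (evalA v h) (evalA v h) = evalA v h := feq v hid.
    rewrite -hh (K_conj (prod_idem v _ nu)) {2}H -K_conj ?conj_neg ?conjB //; exact: prod_idem.
  + by case: Hn; exists nu.
Qed.

Lemma le3O (x y : t3) : le (A:=T3) x y -> x = O3 -> y = O3.
Proof. by move=> h hx; move: h; rewrite hx /le; case: y. Qed.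

Lemma fe_min (nu : 'I_n -> t3) : min_idem_ji (fe nu).
Proof.
have hidem : idem_ji (fe nu).
  split; first by apply: fequiv_of => A v /=; exact: prod_idem.
  split.
  - move=> H; have := feq (A:=T3) nu H.
    change (ev3 nu (fe nu) = Z3 -> False); by rewrite fe_self.
  - move=> b c H; have h3 := feq (A:=T3) nu H.
    change (ev3 nu (fe nu) = ev3 nu (FJoin b c)) in h3; rewrite fe_self in h3.
    have : ev3 nu b = O3 \/ ev3 nu c = O3.
      move: h3; rewrite /ev3 /=; case: (evalA (A:=T3) nu b); case: (evalA (A:=T3) nu c) => //=; auto.
    case=> hb; [left|right]; apply: fequiv_of => A v; apply: le_antisym.
    + exact: fle_to (claimA hb).
    + rewrite (feq v H); exact: join_ub.
    + exact: fle_to (claimA hb).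
    + rewrite (feq v H) /= nm_meetC; exact: join_ub.
split => // h [hid hji] hle.
have [mu hmu] := nonzero_ex hid (proj1 hji).
have hA := claimA hmu.
have h1 := le3O (fle_to (A:=T3) mu hA) (fe_self mu).
have h2 : ev3 mu (fe nu) = O3.
  move: (fle_to (A:=T3) mu hle) h1; rewrite /le /ev3 /=.
  case: (evalA (A:=T3) mu h); case: (evalA (A:=T3) mu (fe nu)); simpl; intros; congruence.
have h3 : ev3 nu h = O3.
  have heq : forall i, nu i = mu i by move=> i; rewrite (fe_eq h2).
  rewrite /ev3 (@evalA_ext _ T3 nu mu h heq); exact: h1.
apply: fequiv_of => A v; apply: le_antisym; first exact: fle_to hle.
exact: fle_to (claimA h3).
Qed.
End Facts.

Local Open Scope ring_scope.
Ltac rt := rewrite /std_conj /std_imp /Order.min /Order.max;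
  repeat match goal with |- context [if ?b then _ else _] => let E := fresh in destruct b eqn:E end; try lra.

Definition to3 (x : t3) : 'I_3 := match x with
  | Z3 => @Ordinal 3 0 isT | H3 => @Ordinal 3 1 isT | O3 => @Ordinal 3 2 isT end.
Definition of3 (k : 'I_3) : t3 := match nat_of_ord k with 0%N => Z3 | 1%N => H3 | _ => O3 end.
Lemma of3K k : to3 (of3 k) = k.
Proof. case: k => m hm; apply: val_inj => /=. by case: m hm => [|[|[|m]]]. Qed.
Lemma to3K x : of3 (to3 x) = x. Proof. by case: x. Qed.
Definition r3 (x : t3) : rat := val3 (to3 x).

Lemma r3_conj a b : std_conj (r3 a) (r3 b) = r3 (conj3 a b).
Proof. case: a; case: b; rewrite /r3 /val3 /=; rt. Qed.
Lemma r3_imp a b : std_imp (r3 a) (r3 b) = r3 (imp3 a b).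
Proof. case: a; case: b; rewrite /r3 /val3 /=; rt. Qed.
Lemma r3_meet a b : Num.min (r3 a) (r3 b) = r3 (meet3 a b).
Proof. case: a; case: b; rewrite /r3 /val3 /=; rt. Qed.
Lemma r3_one x : r3 x = 1 -> x = O3.
Proof. case: x => //; rewrite /r3 /val3 /= => h; exfalso; lra. Qed.
Lemma r3_O : r3 O3 = 1. Proof. rewrite /r3 /val3 /=; lra. Qed.

Lemma eval3_ext n (v v' : 'I_n -> rat) t : (forall i, v i = v' i) -> eval3 v t = eval3 v' t.
Proof. move=> h; elim: t => //= [a -> b ->|a -> b ->|a -> b ->] //. Qed.

Lemma sim n (nu : 'I_n -> t3) t : eval3 (fun i => r3 (nu i)) t = r3 (ev3 nu t).
Proof.
rewrite /ev3; elim: t => [i||a iha b ihb|a iha b ihb|a iha b ihb] /=.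
- by [].
- rewrite /r3 /val3 /=; lra.
- rewrite iha ihb; exact: r3_conj.
- rewrite iha ihb; exact: r3_meet.
- rewrite iha ihb; exact: r3_imp.
Qed.

Definition nuof n (mu : assign n) := fun i => of3 (mu i).

Lemma inO n (mu : assign n) phi : mu \in O_set phi <-> ev3 (nuof mu) phi = O3.
Proof.
rewrite inE; split.
- move/eqP => h; apply: r3_one; rewrite -sim -h; apply: eval3_ext => i.
  by rewrite /nuof /r3 of3K.
- move=> h; apply/eqP; rewrite (@eval3_ext _ _ (fun i => r3 (nuof mu i))) ?sim ?h ?r3_O //.
  move=> i; by rewrite /nuof /r3 of3K.
Qed.

Theorem lemma4 (n : nat) (hn : (1 <= n)%N) (phi : nmform n) :
  exists f : assign n -> nmform n,
    (forall mu, mu \in O_set phi -> min_idem_ji (f mu) /\ fle (f mu) phi) /\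
    (forall mu nu, mu \in O_set phi -> nu \in O_set phi ->
        fequiv (f mu) (f nu) -> mu = nu) /\
    (forall g : nmform n, min_idem_ji g -> fle g phi ->
        exists2 mu, mu \in O_set phi & fequiv g (f mu)).
Proof.
exists (fun mu => fe (nuof mu)); split; [|split].
- move=> mu /inO hmu; split; [exact: fe_min | exact: claimA].
- move=> mu nu _ _ H; have := feq (A:=T3) (nuof mu) H.
  change (ev3 (nuof mu) (fe (nuof mu)) = ev3 (nuof mu) (fe (nuof nu)) -> mu = nu).
  rewrite fe_self => /esym h; have := fe_eq h => heq.
  apply/ffunP => i; have := heq i; rewrite /nuof => /(congr1 to3); by rewrite !of3K.
- move=> g [[gid gji] gmin] hle.
  have [nu hnu] := nonzero_ex gid (proj1 gji).
  set mu : assign n := [ffun i => to3 (nu i)].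
  have hmn : forall i, nu i = nuof mu i by move=> i; rewrite /nuof ffunE to3K.
  have hg : ev3 (nuof mu) g = O3.
    by rewrite /ev3 -(@evalA_ext _ T3 nu (nuof mu) g hmn).
  exists mu.
  + apply/inO; exact: (le3O (fle_to (A:=T3) (nuof mu) hle) hg).
  + apply: fequiv_sym; apply: gmin; [exact: (proj1 (fe_min _)) | exact: claimA].
Qed.
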